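(* Let $d\ge2$, $A\in\mathbb R^{m,m}$, $f\in C^1(\mathbb R^m,\mathbb R^m)$, $S\in\mathbb R^{d,d}$ skew-symmetric, and let $U\in\mathbb C^{d,d}$ be unitary with $U^HSU=\Lambda_S=\operatorname{diag}(\lambda_1^S,\dots,\lambda_d^S)$, where $\lambda_1^S,\dots,\lambda_d^S$ are the eigenvalues of $S$. Let $v_\star\in C^3(\mathbb R^d,\mathbb R^m)$ be a classical solution of $A\Delta v_\star(x)+\langle Sx,\nabla v_\star(x)\rangle+f(v_\star(x))=0$, $x\in\mathbb R^d$. Then $v(x)=Dv_\star(x)(Ex+b)$, $x\in\mathbb R^d$, is a classical solution of $\lambda v-\mathcal Lv=0$ on $\mathbb R^d$, where $\mathcal Lv(x)=A\Delta v(x)+\langle Sx,\nabla v(x)\rangle+Df(v_\star(x))v(x)$, whenever either (i) $\lambda=-\lambda_l^S$, $E=0$, $b=Ue_l$ for some $l\in\{1,\dots,d\}$, or (ii) $\lambda=-(\lambda_i^S+\lambda_j^S)$, $E=U(I_{ij}-I_{ji})U^\top$, $b=0$ for some $1\le i<j\le d$. All these values $\lambda$ lie on the imaginary axis.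
   Context: For $x\in\mathbb R^d$, $\langle Sx,\nabla v(x)\rangle=\sum_{i,j=1}^dS_{ij}x_j\partial_{x_i}v(x)$. $e_l$ denotes the $l$-th standard unit vector of $\mathbb C^d$, and $I_{ij}=e_ie_j^\top\in\mathbb R^{d,d}$ is the matrix with entry $1$ in row $i$, column $j$ and $0$ elsewhere. $Dv_\star(x)\in\mathbb R^{m,d}$ is the Jacobian of $v_\star$ at $x$. *)

(* Defs.v *)
From Stdlib Require Import Reals Lra Lia ClassicalEpsilon.
Open Scope R_scope.

Fixpoint rsum (n : nat) (f : nat -> R) : R :=
  match n with
  | O => 0
  | S n' => rsum n' f + f n'
  end.

Record Cx : Type := mkCx { Re : R; Im : R }.
Definition RtoCx (r : R) : Cx := mkCx r 0.
Definition Cx0 : Cx := RtoCx 0.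
Definition Cx1 : Cx := RtoCx 1.
Definition Cxadd (z w : Cx) : Cx := mkCx (Re z + Re w) (Im z + Im w).
Definition Cxopp (z : Cx) : Cx := mkCx (- Re z) (- Im z).
Definition Cxsub (z w : Cx) : Cx := Cxadd z (Cxopp w).
Definition Cxmul (z w : Cx) : Cx :=
  mkCx (Re z * Re w - Im z * Im w) (Re z * Im w + Im z * Re w).
Definition Cxconj (z : Cx) : Cx := mkCx (Re z) (- Im z).
Fixpoint Cxsum (n : nat) (f : nat -> Cx) : Cx :=
  match n with
  | O => Cx0
  | S n' => Cxadd (Cxsum n' f) (f n')
  end.

(* ---------- Vectors / points of R^d ----------
   A point of R^d is encoded as x : nat -> R, of which only the coordinates
   x 0, ..., x (d-1) are meaningful.  All regularity notions below are
   relative to these d coordinates; in particular continuity in this sense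
   forces a function to ignore the coordinates >= d, so such functions are
   exactly functions on R^d. *)
Definition upd (x : nat -> R) (i : nat) (t : R) : nat -> R :=
  fun k => if Nat.eqb k i then t else x k.

Definition cont_d (d : nat) (g : (nat -> R) -> R) : Prop :=
  forall (x : nat -> R) (eps : R), 0 < eps ->
    exists delta, 0 < delta /\
      forall y : nat -> R,
        (forall i, (i < d)%nat -> Rabs (y i - x i) < delta) ->
        Rabs (g y - g x) < eps.

Definition partial_is (g : (nat -> R) -> R) (i : nat) (x : nat -> R) (l : R)
  : Prop :=
  derivable_pt_lim (fun t => g (upd x i t)) (x i) l.

(* the i-th partial derivative (the unique limit when it exists, 0 otherwise) *)
Definition pd (g : (nat -> R) -> R) (i : nat) (x : nat -> R) : R :=
  match excluded_middle_informative (exists l, partial_is g i x l) with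
  | left H => proj1_sig (constructive_indefinite_description _ H)
  | right _ => 0
  end.

Fixpoint Ck (k d : nat) (g : (nat -> R) -> R) : Prop :=
  match k with
  | O => cont_d d g
  | S k' => cont_d d g /\
            (forall i x, (i < d)%nat -> exists l, partial_is g i x l) /\
            (forall i, (i < d)%nat -> Ck k' d (pd g i))
  end.

Definition CkV (k d m : nat) (F : (nat -> R) -> (nat -> R)) : Prop :=
  forall c, (c < m)%nat -> Ck k d (fun x => F x c).

Definition CkC (k d m : nat) (F : (nat -> R) -> (nat -> Cx)) : Prop :=
  forall c, (c < m)%nat ->
    Ck k d (fun x => Re (F x c)) /\ Ck k d (fun x => Im (F x c)).

Definition pdC (g : (nat -> R) -> Cx) (i : nat) (x : nat -> R) : Cx :=
  mkCx (pd (fun y => Re (g y)) i x) (pd (fun y => Im (g y)) i x).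

Definition skew (d : nat) (S : nat -> nat -> R) : Prop :=
  forall i j, (i < d)%nat -> (j < d)%nat -> S j i = - S i j.

Definition unitary (d : nat) (U : nat -> nat -> Cx) : Prop :=
  forall i j, (i < d)%nat -> (j < d)%nat ->
    Cxsum d (fun k => Cxmul (Cxconj (U k i)) (U k j))
    = if Nat.eqb i j then Cx1 else Cx0.

Definition UHSU (d : nat) (U : nat -> nat -> Cx) (S : nat -> nat -> R)
  (i j : nat) : Cx :=
  Cxsum d (fun k => Cxsum d (fun l =>
    Cxmul (Cxmul (Cxconj (U k i)) (RtoCx (S k l))) (U l j))).

Definition diagonalizes (d : nat) (U : nat -> nat -> Cx) (S : nat -> nat -> R)
  (lam : nat -> Cx) : Prop :=
  forall i j, (i < d)%nat -> (j < d)%nat ->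
    UHSU d U S i j = if Nat.eqb i j then lam i else Cx0.

Definition solves_nonlinear (d m : nat) (A : nat -> nat -> R)
  (S : nat -> nat -> R) (f : (nat -> R) -> (nat -> R))
  (vs : (nat -> R) -> (nat -> R)) : Prop :=
  CkV 2 d m vs /\
  forall (x : nat -> R) c, (c < m)%nat ->
    rsum m (fun c' => A c c' *
              rsum d (fun i => pd (pd (fun y => vs y c') i) i x))
    + rsum d (fun i => rsum d (fun j => S i j * x j * pd (fun y => vs y c) i x))
    + f (vs x) c = 0.

Definition solves_eig (d m : nat) (A : nat -> nat -> R)
  (S : nat -> nat -> R) (f : (nat -> R) -> (nat -> R))
  (vs : (nat -> R) -> (nat -> R)) (lam : Cx)
  (v : (nat -> R) -> (nat -> Cx)) : Prop :=
  CkC 2 d m v /\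
  forall (x : nat -> R) c, (c < m)%nat ->
    Cxsub (Cxmul lam (v x c))
      (Cxadd (Cxadd
        (Cxsum m (fun c' => Cxmul (RtoCx (A c c'))
              (Cxsum d (fun i => pdC (fun y => pdC (fun z => v z c') i y) i x))))
        (Cxsum d (fun i => Cxsum d (fun j =>
              Cxmul (RtoCx (S i j * x j)) (pdC (fun y => v y c) i x)))))
        (Cxsum m (fun c' =>
              Cxmul (RtoCx (pd (fun y => f y c) c' (vs x))) (v x c'))))
    = Cx0.

Definition vfun (d : nat) (vs : (nat -> R) -> (nat -> R))
  (E : nat -> nat -> Cx) (b : nat -> Cx) : (nat -> R) -> (nat -> Cx) :=
  fun x c => Cxsum d (fun j =>
    Cxmul (RtoCx (pd (fun y => vs y c) j x))
          (Cxadd (Cxsum d (fun k => Cxmul (E j k) (RtoCx (x k)))) (b j))).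

Definition E0 : nat -> nat -> Cx := fun _ _ => Cx0.
Definition b_i (U : nat -> nat -> Cx) (l : nat) : nat -> Cx := fun a => U a l.
Definition E_ii (U : nat -> nat -> Cx) (i j : nat) : nat -> nat -> Cx :=
  fun a c => Cxsub (Cxmul (U a i) (U c j)) (Cxmul (U a j) (U c i)).
Definition b0 : nat -> Cx := fun _ => Cx0.

(* Main.v *)
Require Import Defs.
From Stdlib Require Import Reals Lra Lia FunctionalExtensionality ClassicalEpsilon Setoid.
From mathcomp Require all_boot all_algebra.
From mathcomp Require Rstruct complex.
Open Scope R_scope.

Lemma rsum_ext_lt n f g : (forall k, (k < n)%nat -> f k = g k) -> rsum n f = rsum n g.
Proof. induction n; simpl; intros H; auto. rewrite IHn by (intros; apply H; lia). rewrite H by lia; auto. Qed.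

Lemma rsum_plus n f g : rsum n (fun k => f k + g k) = rsum n f + rsum n g.
Proof. induction n; simpl; [lra|rewrite IHn; lra]. Qed.

Lemma rsum_minus n f g : rsum n (fun k => f k - g k) = rsum n f - rsum n g.
Proof. induction n; simpl; [lra|rewrite IHn; lra]. Qed.

Lemma rsum_opp n f : rsum n (fun k => - f k) = - rsum n f.
Proof. induction n; simpl; [lra|rewrite IHn; lra]. Qed.

Lemma rsum_mult_l n c f : c * rsum n f = rsum n (fun k => c * f k).
Proof. induction n; simpl; [lra|rewrite <- IHn; lra]. Qed.

Lemma rsum_mult_r n c f : rsum n f * c = rsum n (fun k => f k * c).
Proof. induction n; simpl; [lra|rewrite <- IHn; lra]. Qed.

Lemma rsum_zero n f : (forall k, (k < n)%nat -> f k = 0) -> rsum n f = 0.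
Proof. induction n; simpl; intros H; auto. rewrite IHn, H by (intros; try apply H; lia). lra. Qed.

Lemma rsum_swap n p F :
  rsum n (fun i => rsum p (fun j => F i j)) = rsum p (fun j => rsum n (fun i => F i j)).
Proof.
  induction n; simpl.
  - symmetry; apply rsum_zero; auto.
  - rewrite IHn, <- rsum_plus. reflexivity.
Qed.

Lemma rsum_delta n a f : (a < n)%nat ->
  rsum n (fun k => if Nat.eqb k a then f k else 0) = f a.
Proof.
  induction n; intros H; [lia|]. simpl.
  destruct (Nat.eqb n a) eqn:E.
  - apply Nat.eqb_eq in E; subst. rewrite rsum_zero. lra.
    intros k Hk. destruct (Nat.eqb k a) eqn:E2; auto. apply Nat.eqb_eq in E2; lia.
  - apply Nat.eqb_neq in E. rewrite IHn by lia. lra.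
Qed.

Lemma rsum_delta' n a f : (a < n)%nat ->
  rsum n (fun k => f k * (if Nat.eqb k a then 1 else 0)) = f a.
Proof.
  intros H. rewrite <- (rsum_delta n a f H). apply rsum_ext_lt. intros k _.
  destruct (Nat.eqb k a); lra.
Qed.

Lemma rsum_antisym n a : (forall i j, (i < n)%nat -> (j < n)%nat -> a i j = - a j i) ->
  rsum n (fun i => rsum n (fun j => a i j)) = 0.
Proof.
  intros H.
  assert (E : rsum n (fun i => rsum n (fun j => a i j)) = - rsum n (fun i => rsum n (fun j => a i j))).
  { rewrite rsum_swap at 1. rewrite <- rsum_opp. apply rsum_ext_lt. intros j Hj.
    rewrite <- rsum_opp. apply rsum_ext_lt. intros i Hi. rewrite (H i j) by auto. lra. }
  lra.
Qed.

Lemma Cx_eq z w : Re z = Re w -> Im z = Im w -> z = w.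
Proof. destruct z, w; simpl; intros; subst; auto. Qed.

Lemma Re_Cxsum n f : Re (Cxsum n f) = rsum n (fun k => Re (f k)).
Proof. induction n; simpl; auto. rewrite IHn; auto. Qed.
Lemma Im_Cxsum n f : Im (Cxsum n f) = rsum n (fun k => Im (f k)).
Proof. induction n; simpl; auto. rewrite IHn; auto. Qed.

Lemma upd_eq x i t : upd x i t i = t.
Proof. unfold upd. rewrite Nat.eqb_refl. auto. Qed.
Lemma upd_neq x i t k : k <> i -> upd x i t k = x k.
Proof. unfold upd. intros H. destruct (Nat.eqb k i) eqn:E; auto. apply Nat.eqb_eq in E; lia. Qed.
Lemma upd_same x i : upd x i (x i) = x.
Proof. apply functional_extensionality. intro k. unfold upd. destruct (Nat.eqb k i) eqn:E; auto.
  apply Nat.eqb_eq in E; subst; auto. Qed.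
Lemma upd_upd x i t s : upd (upd x i t) i s = upd x i s.
Proof. apply functional_extensionality. intro k. unfold upd. destruct (Nat.eqb k i); auto. Qed.
Lemma upd_comm x i j a b : i <> j -> upd (upd x i a) j b = upd (upd x j b) i a.
Proof. intros H. apply functional_extensionality. intro k. unfold upd.
  destruct (Nat.eqb k i) eqn:E1; destruct (Nat.eqb k j) eqn:E2; auto.
  apply Nat.eqb_eq in E1; apply Nat.eqb_eq in E2; lia. Qed.

Lemma pd_eq g i x l : partial_is g i x l -> pd g i x = l.
Proof.
  intros H. unfold pd. destruct (excluded_middle_informative _) as [e|n].
  - destruct (constructive_indefinite_description _ e) as [l' Hl']; simpl.
    eapply uniqueness_limite; eauto.
  - exfalso; apply n; eauto.
Qed.

Lemma pd_spec g i x : (exists l, partial_is g i x l) -> partial_is g i x (pd g i x).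
Proof. intros [l H]. rewrite (pd_eq _ _ _ _ H). auto. Qed.

Lemma partial_const a i x : partial_is (fun _ => a) i x 0.
Proof. unfold partial_is. apply derivable_pt_lim_const. Qed.

Lemma partial_plus g h i x l1 l2 : partial_is g i x l1 -> partial_is h i x l2 ->
  partial_is (fun y => g y + h y) i x (l1 + l2).
Proof. unfold partial_is. intros H1 H2.
  exact (derivable_pt_lim_plus (fun t => g (upd x i t)) (fun t => h (upd x i t)) _ _ _ H1 H2). Qed.

Lemma partial_mult g h i x l1 l2 : partial_is g i x l1 -> partial_is h i x l2 ->
  partial_is (fun y => g y * h y) i x (l1 * h x + g x * l2).
Proof. unfold partial_is. intros H1 H2.
  pose proof (derivable_pt_lim_mult (fun t => g (upd x i t)) (fun t => h (upd x i t)) _ _ _ H1 H2) as H.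
  unfold mult_fct in H. rewrite !upd_same in H. exact H. Qed.

Lemma partial_coord k i x : partial_is (fun y => y k) i x (if Nat.eqb k i then 1 else 0).
Proof. unfold partial_is, upd. destruct (Nat.eqb k i).
  - apply derivable_pt_lim_id.
  - apply derivable_pt_lim_const. Qed.

Lemma partial_rsum n F i x l : (forall j, (j < n)%nat -> partial_is (F j) i x (l j)) ->
  partial_is (fun y => rsum n (fun j => F j y)) i x (rsum n l).
Proof. induction n; intros H; simpl.
  - apply partial_const.
  - apply partial_plus; [apply IHn; intros; apply H; lia| apply H; lia]. Qed.

Lemma partial_ext g h i x l : (forall y, g y = h y) -> partial_is g i x l -> partial_is h i x l.
Proof. intros E H. replace h with g; auto. apply functional_extensionality; auto. Qed.

Lemma cont_dep d g x y : cont_d d g -> (forall i, (i < d)%nat -> y i = x i) -> g y = g x.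
Proof.
  intros Hc Hy. destruct (Req_dec (g y) (g x)) as [E|E]; auto. exfalso.
  destruct (Hc x (Rabs (g y - g x))) as [dl [Hd Hdl]].
  { apply Rabs_pos_lt. lra. }
  specialize (Hdl y). assert (Rabs (g y - g x) < Rabs (g y - g x)); [|lra].
  apply Hdl. intros i Hi. rewrite Hy by auto. replace (x i - x i) with 0 by lra.
  rewrite Rabs_R0; auto.
Qed.

Lemma cont_const d a : cont_d d (fun _ => a).
Proof. intros x eps He. exists 1. split; [lra|]. intros. replace (a - a) with 0 by lra.
  rewrite Rabs_R0; auto. Qed.

Lemma cont_plus d g h : cont_d d g -> cont_d d h -> cont_d d (fun y => g y + h y).
Proof.
  intros Hg Hh x eps He.
  destruct (Hg x (eps/2)) as [d1 [Hd1 H1]]; [lra|].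
  destruct (Hh x (eps/2)) as [d2 [Hd2 H2]]; [lra|].
  exists (Rmin d1 d2). split; [apply Rmin_pos; auto|]. intros y Hy.
  assert (A1 := H1 y (fun i Hi => Rlt_le_trans _ _ _ (Hy i Hi) (Rmin_l _ _))).
  assert (A2 := H2 y (fun i Hi => Rlt_le_trans _ _ _ (Hy i Hi) (Rmin_r _ _))).
  replace (g y + h y - (g x + h x)) with ((g y - g x) + (h y - h x)) by lra.
  eapply Rle_lt_trans; [apply Rabs_triang|]. lra.
Qed.

Lemma cont_mult d g h : cont_d d g -> cont_d d h -> cont_d d (fun y => g y * h y).
Proof.
  intros Hg Hh x eps He.
  set (a := g x). set (b := h x).
  assert (Pa : 0 < 3 * (Rabs a + 1)) by (pose proof (Rabs_pos a); lra).
  assert (Pb : 0 < 3 * (Rabs b + 1)) by (pose proof (Rabs_pos b); lra).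
  destruct (Hg x (Rmin 1 (eps / (3 * (Rabs b + 1))))) as [d1 [Hd1 H1]].
  { apply Rmin_pos; [lra| apply Rdiv_lt_0_compat; lra]. }
  destruct (Hh x (Rmin 1 (eps / (3 * (Rabs a + 1))))) as [d2 [Hd2 H2]].
  { apply Rmin_pos; [lra| apply Rdiv_lt_0_compat; lra]. }
  exists (Rmin d1 d2). split; [apply Rmin_pos; auto|]. intros y Hy.
  assert (A1 := H1 y (fun i Hi => Rlt_le_trans _ _ _ (Hy i Hi) (Rmin_l _ _))).
  assert (A2 := H2 y (fun i Hi => Rlt_le_trans _ _ _ (Hy i Hi) (Rmin_r _ _))).
  fold a b in A1, A2 |- *.
  set (u := g y - a) in *. set (v := h y - b) in *.
  replace (g y * h y - a * b) with (a * v + u * b + u * v) by (unfold u, v; ring).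
  assert (U1 : Rabs u < 1) by (eapply Rlt_le_trans; [exact A1| apply Rmin_l]).
  assert (U2 : Rabs u < eps / (3 * (Rabs b + 1))) by (eapply Rlt_le_trans; [exact A1| apply Rmin_r]).
  assert (V1 : Rabs v < 1) by (eapply Rlt_le_trans; [exact A2| apply Rmin_l]).
  assert (V2 : Rabs v < eps / (3 * (Rabs a + 1))) by (eapply Rlt_le_trans; [exact A2| apply Rmin_r]).
  assert (T1 : Rabs a * Rabs v <= eps / 3).
  { apply Rmult_lt_compat_r with (r := 3 * (Rabs a + 1)) in V2; [|lra].
    unfold Rdiv in V2. rewrite Rmult_assoc, Rinv_l in V2 by lra.
    pose proof (Rabs_pos a); pose proof (Rabs_pos v). nra. }
  assert (T2 : Rabs u * Rabs b <= eps / 3).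
  { apply Rmult_lt_compat_r with (r := 3 * (Rabs b + 1)) in U2; [|lra].
    unfold Rdiv in U2. rewrite Rmult_assoc, Rinv_l in U2 by lra.
    pose proof (Rabs_pos b); pose proof (Rabs_pos u). nra. }
  assert (T3 : Rabs u * Rabs v < eps / 3).
  { assert (Rabs u < eps / 3).
    { eapply Rlt_le_trans; [exact U2|]. unfold Rdiv. apply Rmult_le_compat_l; [lra|].
      apply Rinv_le_contravar; [lra|]. pose proof (Rabs_pos b); lra. }
    pose proof (Rabs_pos u); pose proof (Rabs_pos v). nra. }
  eapply Rle_lt_trans; [apply Rabs_triang|].
  rewrite Rabs_mult.
  eapply Rle_lt_trans; [apply Rplus_le_compat_r; apply Rabs_triang|].
  rewrite !Rabs_mult. lra.
Qed.

Lemma cont_coord d k : (k < d)%nat -> cont_d d (fun y => y k).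
Proof. intros Hk x eps He. exists eps. split; auto. Qed.

Lemma cont_rsum d n F : (forall j, (j < n)%nat -> cont_d d (F j)) ->
  cont_d d (fun y => rsum n (fun j => F j y)).
Proof. induction n; intros H; simpl.
  - apply cont_const.
  - apply cont_plus; [apply IHn; intros; apply H; lia| apply H; lia]. Qed.

Lemma Ck_cont k d g : Ck k d g -> cont_d d g.
Proof. destruct k; simpl; tauto. Qed.

Lemma Ck_S k d g : Ck (S k) d g -> Ck k d g.
Proof.
  revert g; induction k; intros g H; simpl in *.
  - tauto.
  - destruct H as [H1 [H2 H3]]. split; [auto|split; [auto|]].
    intros i Hi. apply IHk. apply H3; auto.
Qed.

Lemma Ck_pd k d g i : Ck (S k) d g -> (i < d)%nat -> Ck k d (pd g i).
Proof. simpl. intros [_ [_ H]] Hi. auto. Qed.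

Lemma Ck_partial k d g i x : Ck (S k) d g -> (i < d)%nat -> partial_is g i x (pd g i x).
Proof. simpl. intros [_ [H _]] Hi. apply pd_spec. auto. Qed.

Lemma Ck_ext k d g h : (forall y, g y = h y) -> Ck k d g -> Ck k d h.
Proof. intros E H. replace h with g; auto. apply functional_extensionality; auto. Qed.

Lemma pd_ext_fun g i l : (forall x, partial_is g i x (l x)) -> pd g i = l.
Proof. intros H. apply functional_extensionality. intro x. apply pd_eq. auto. Qed.

Lemma Ck_const k d a : Ck k d (fun _ => a).
Proof.
  revert a; induction k; intro a; simpl.
  - apply cont_const.
  - split; [apply cont_const|split].
    + intros. exists 0. apply partial_const.
    + intros i Hi. rewrite (pd_ext_fun _ i (fun _ => 0)); [apply IHk|].
      intros; apply partial_const.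
Qed.

Lemma Ck_plus k d g h : Ck k d g -> Ck k d h -> Ck k d (fun y => g y + h y).
Proof.
  revert g h; induction k; intros g h Hg Hh.
  - simpl in *. apply cont_plus; auto.
  - split; [apply cont_plus; eapply Ck_cont; eauto|split].
    + intros i x Hi. eexists. apply partial_plus; apply (Ck_partial k d); eauto.
    + intros i Hi. rewrite (pd_ext_fun _ i (fun x => pd g i x + pd h i x)).
      * apply IHk; apply Ck_pd; auto.
      * intros x. apply partial_plus; apply (Ck_partial k d); eauto.
Qed.

Lemma Ck_mult k d g h : Ck k d g -> Ck k d h -> Ck k d (fun y => g y * h y).
Proof.
  revert g h; induction k; intros g h Hg Hh.
  - simpl in *. apply cont_mult; auto.
  - split; [apply cont_mult; eapply Ck_cont; eauto|split].
    + intros i x Hi. eexists. apply partial_mult; apply (Ck_partial k d); eauto.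
    + intros i Hi. rewrite (pd_ext_fun _ i (fun x => pd g i x * h x + g x * pd h i x)).
      * apply Ck_plus; apply IHk; try (apply Ck_pd; auto); apply Ck_S; auto.
      * intros x. apply partial_mult; apply (Ck_partial k d); eauto.
Qed.

Lemma Ck_coord k d k0 : (k0 < d)%nat -> Ck k d (fun y => y k0).
Proof.
  intros Hk. destruct k; simpl.
  - apply cont_coord; auto.
  - split; [apply cont_coord; auto|split].
    + intros. eexists. apply partial_coord.
    + intros i Hi. rewrite (pd_ext_fun _ i (fun _ => if Nat.eqb k0 i then 1 else 0)).
      * apply Ck_const.
      * intros; apply partial_coord.
Qed.

Lemma Ck_rsum k d n F : (forall j, (j < n)%nat -> Ck k d (F j)) ->
  Ck k d (fun y => rsum n (fun j => F j y)).
Proof. induction n; intros H; simpl.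
  - apply Ck_const.
  - apply Ck_plus; [apply IHn; intros; apply H; lia| apply H; lia]. Qed.

Lemma dlim_minus f1 f2 x l1 l2 : derivable_pt_lim f1 x l1 -> derivable_pt_lim f2 x l2 ->
  derivable_pt_lim (fun t => f1 t - f2 t) x (l1 - l2).
Proof. intros H1 H2. exact (derivable_pt_lim_minus f1 f2 x l1 l2 H1 H2). Qed.

Lemma dlim_plus f1 f2 x l1 l2 : derivable_pt_lim f1 x l1 -> derivable_pt_lim f2 x l2 ->
  derivable_pt_lim (fun t => f1 t + f2 t) x (l1 + l2).
Proof. intros H1 H2. exact (derivable_pt_lim_plus f1 f2 x l1 l2 H1 H2). Qed.

Lemma dlim_rsum n F x l : (forall c, (c < n)%nat -> derivable_pt_lim (F c) x (l c)) ->
  derivable_pt_lim (fun t => rsum n (fun c => F c t)) x (rsum n l).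
Proof. induction n; intros H; simpl.
  - apply derivable_pt_lim_const.
  - apply dlim_plus; [apply IHn; intros; apply H; lia| apply H; lia]. Qed.

Lemma MVT_gen f f' a b :
  (forall c, Rmin a b <= c <= Rmax a b -> derivable_pt_lim f c (f' c)) ->
  exists c, Rmin a b <= c <= Rmax a b /\ f b - f a = f' c * (b - a).
Proof.
  intros H. destruct (Rtotal_order a b) as [L|[E|G]].
  - destruct (MVT_cor2 f f' a b L) as [c [E Hc]].
    { intros c Hc. apply H. rewrite Rmin_left, Rmax_right by lra. lra. }
    exists c. rewrite Rmin_left, Rmax_right by lra. split; [lra|auto].
  - subst. exists b. rewrite Rmin_left, Rmax_left by lra. split; [lra|ring].
  - destruct (MVT_cor2 f f' b a G) as [c [E Hc]].
    { intros c Hc. apply H. rewrite Rmin_right, Rmax_left by lra. lra. }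
    exists c. rewrite Rmin_right, Rmax_left by lra. split; [lra|]. lra.
Qed.

Lemma fin_delta n (Q : nat -> R -> Prop) :
  (forall c, (c < n)%nat -> exists dl, 0 < dl /\ forall h, Rabs h < dl -> Q c h) ->
  exists dl, 0 < dl /\ forall h, Rabs h < dl -> forall c, (c < n)%nat -> Q c h.
Proof.
  induction n; intros H.
  - exists 1. split; [lra|]. intros; lia.
  - destruct IHn as [d1 [Hd1 H1]]. { intros; apply H; lia. }
    destruct (H n) as [d2 [Hd2 H2]]; [lia|].
    exists (Rmin d1 d2). split; [apply Rmin_pos; auto|]. intros h Hh c Hc.
    destruct (Nat.eq_dec c n) as [->|Hne].
    + apply H2. eapply Rlt_le_trans; [exact Hh| apply Rmin_r].
    + apply H1; [eapply Rlt_le_trans; [exact Hh| apply Rmin_l]|lia].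
Qed.

Lemma dlim_cont f t0 l : derivable_pt_lim f t0 l ->
  forall e, 0 < e -> exists dl, 0 < dl /\ forall h, Rabs h < dl -> Rabs (f (t0 + h) - f t0) < e.
Proof.
  intros H e He. destruct (H 1 Rlt_0_1) as [d1 Hd1].
  assert (Pl : 0 < Rabs l + 1) by (pose proof (Rabs_pos l); lra).
  exists (Rmin d1 (e / (Rabs l + 1))). split.
  { apply Rmin_pos; [apply cond_pos| apply Rdiv_lt_0_compat; lra]. }
  intros h Hh. destruct (Req_dec h 0) as [->|Hn].
  - rewrite Rplus_0_r. replace (f t0 - f t0) with 0 by ring. rewrite Rabs_R0; auto.
  - assert (A := Hd1 h Hn (Rlt_le_trans _ _ _ Hh (Rmin_l _ _))).
    assert (B : Rabs h < e / (Rabs l + 1)) by (eapply Rlt_le_trans; [exact Hh|apply Rmin_r]).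
    set (q := (f (t0 + h) - f t0) / h) in A.
    assert (E : f (t0 + h) - f t0 = q * h) by (unfold q; field; auto).
    rewrite E, Rabs_mult.
    assert (Rabs q < Rabs l + 1).
    { replace q with ((q - l) + l) by ring. eapply Rle_lt_trans; [apply Rabs_triang|]. lra. }
    apply Rmult_lt_compat_r with (r := Rabs l + 1) in B; [|lra].
    unfold Rdiv in B. rewrite Rmult_assoc, Rinv_l in B by lra.
    pose proof (Rabs_pos q); pose proof (Rabs_pos h). nra.
Qed.

Section Schwarz.
Variables (d : nat) (g : (nat -> R) -> R) (i j : nat) (x : nat -> R).
Hypothesis Hg : Ck 2 d g.
Hypothesis Hi : (i < d)%nat.
Hypothesis Hj : (j < d)%nat.
Hypothesis Hij : i <> j.

Let P u v := upd (upd x i u) j v.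

Lemma P_i u v t : upd (P u v) i t = P t v.
Proof. unfold P. rewrite upd_comm by auto. rewrite upd_upd. auto. Qed.
Lemma P_j u v t : upd (P u v) j t = P u t.
Proof. unfold P. rewrite upd_upd. auto. Qed.
Lemma P_ci u v : P u v i = u.
Proof. unfold P. rewrite upd_neq by auto. apply upd_eq. Qed.
Lemma P_cj u v : P u v j = v.
Proof. unfold P. apply upd_eq. Qed.
Lemma P_x : P (x i) (x j) = x.
Proof. unfold P. rewrite !upd_same. auto. Qed.

Lemma gen_u (G : (nat -> R) -> R) u v : partial_is G i (P u v) (pd G i (P u v)) ->
  derivable_pt_lim (fun t => G (P t v)) u (pd G i (P u v)).
Proof. unfold partial_is. intros H. rewrite P_ci in H.
  eapply derivable_pt_lim_ext; [|exact H]. intros t. simpl. rewrite P_i. auto. Qed.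
Lemma gen_v (G : (nat -> R) -> R) u v : partial_is G j (P u v) (pd G j (P u v)) ->
  derivable_pt_lim (fun t => G (P u t)) v (pd G j (P u v)).
Proof. unfold partial_is. intros H. rewrite P_cj in H.
  eapply derivable_pt_lim_ext; [|exact H]. intros t. simpl. rewrite P_j. auto. Qed.

Lemma P_close u v dl : Rabs (u - x i) < dl -> Rabs (v - x j) < dl -> 0 < dl ->
  forall k, Rabs (P u v k - x k) < dl.
Proof. intros Hu Hv Hd k. unfold P, upd.
  destruct (Nat.eqb k j) eqn:E1; [apply Nat.eqb_eq in E1; subst; auto|].
  destruct (Nat.eqb k i) eqn:E2; [apply Nat.eqb_eq in E2; subst; auto|].
  replace (x k - x k) with 0 by ring. rewrite Rabs_R0. auto. Qed.

Lemma schwarz_aux : pd (pd g i) j x = pd (pd g j) i x.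
Proof.
  set (K1 := pd (pd g i) j). set (K2 := pd (pd g j) i).
  assert (Cg1 : Ck 1 d (pd g i)) by (apply Ck_pd; auto).
  assert (Cg2 : Ck 1 d (pd g j)) by (apply Ck_pd; auto).
  assert (CK1 : cont_d d K1) by (apply (Ck_pd 0); auto).
  assert (CK2 : cont_d d K2) by (apply (Ck_pd 0); auto).
  assert (Du : forall u v, derivable_pt_lim (fun t => g (P t v)) u (pd g i (P u v)))
    by (intros; apply gen_u; apply (Ck_partial 1 d); auto).
  assert (Dv : forall u v, derivable_pt_lim (fun t => g (P u t)) v (pd g j (P u v)))
    by (intros; apply gen_v; apply (Ck_partial 1 d); auto).
  assert (Div : forall u v, derivable_pt_lim (fun t => pd g i (P u t)) v (K1 (P u v)))
    by (intros; apply gen_v; apply (Ck_partial 0 d); auto).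
  assert (Dju : forall u v, derivable_pt_lim (fun t => pd g j (P t v)) u (K2 (P u v)))
    by (intros; apply gen_u; apply (Ck_partial 0 d); auto).
  assert (Key : forall eps, 0 < eps -> Rabs (K1 x - K2 x) < 2 * eps).
  { intros eps He.
    destruct (CK1 x eps He) as [d1 [Hd1 H1]].
    destruct (CK2 x eps He) as [d2 [Hd2 H2]].
    set (h := Rmin d1 d2 / 2).
    assert (Hh : 0 < h) by (unfold h; pose proof (Rmin_pos _ _ Hd1 Hd2); lra).
    assert (Hh1 : h < d1) by (unfold h; pose proof (Rmin_l d1 d2); lra).
    assert (Hh2 : h < d2) by (unfold h; pose proof (Rmin_r d1 d2); lra).
    set (a := x i). set (b := x j).
    destruct (MVT_cor2 (fun u => g (P u (b + h)) - g (P u b))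
               (fun u => pd g i (P u (b + h)) - pd g i (P u b)) a (a + h)) as [xi [E1 Hxi]].
    { lra. } { intros; apply dlim_minus; apply Du. }
    destruct (MVT_cor2 (fun v => pd g i (P xi v)) (fun v => K1 (P xi v)) b (b + h))
      as [eta [E2 Heta]]. { lra. } { intros; apply Div. }
    destruct (MVT_cor2 (fun v => g (P (a + h) v) - g (P a v))
               (fun v => pd g j (P (a + h) v) - pd g j (P a v)) b (b + h)) as [eta' [E3 Heta']].
    { lra. } { intros; apply dlim_minus; apply Dv. }
    destruct (MVT_cor2 (fun u => pd g j (P u eta')) (fun u => K2 (P u eta')) a (a + h))
      as [xi' [E4 Hxi']]. { lra. } { intros; apply Dju. }
    simpl in E1, E2, E3, E4.
    assert (EQ : K1 (P xi eta) = K2 (P xi' eta')).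
    { assert (K1 (P xi eta) * (h * h) = K2 (P xi' eta') * (h * h)).
      { replace (K1 (P xi eta) * (h * h)) with ((K1 (P xi eta) * (b + h - b)) * (a + h - a)) by ring.
        rewrite <- E2, <- E1.
        replace (K2 (P xi' eta') * (h * h)) with ((K2 (P xi' eta') * (a + h - a)) * (b + h - b)) by ring.
        rewrite <- E4, <- E3. ring. }
      apply Rmult_eq_reg_r with (h * h); auto. nra. }
    assert (A1 : Rabs (K1 (P xi eta) - K1 x) < eps).
    { apply H1. intros k _. apply P_close; try lra; unfold a, b in *;
      rewrite Rabs_right; lra. }
    assert (A2 : Rabs (K2 (P xi' eta') - K2 x) < eps).
    { apply H2. intros k _. apply P_close; try lra; unfold a, b in *;
      rewrite Rabs_right; lra. }
    rewrite EQ in A1.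
    replace (K1 x - K2 x) with (- (K2 (P xi' eta') - K1 x) + (K2 (P xi' eta') - K2 x)) by ring.
    eapply Rle_lt_trans; [apply Rabs_triang|]. rewrite Rabs_Ropp. lra. }
  destruct (Req_dec (K1 x) (K2 x)) as [E|E]; auto. exfalso.
  assert (Hp : 0 < Rabs (K1 x - K2 x)) by (apply Rabs_pos_lt; lra).
  specialize (Key (Rabs (K1 x - K2 x) / 4)). lra.
Qed.
End Schwarz.

Lemma schwarz d g i j x : Ck 2 d g -> (i < d)%nat -> (j < d)%nat ->
  pd (pd g i) j x = pd (pd g j) i x.
Proof. intros. destruct (Nat.eq_dec i j) as [->|Hn]; auto. apply schwarz_aux with d; auto. Qed.

Lemma schwarz_fun d g i j : Ck 2 d g -> (i < d)%nat -> (j < d)%nat ->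
  pd (pd g i) j = pd (pd g j) i.
Proof. intros. apply functional_extensionality. intro. apply schwarz with d; auto. Qed.

Section Chain.
Variables (m : nat) (g : (nat -> R) -> R) (gam : R -> nat -> R) (t0 : R) (gam' : nat -> R).
Hypothesis Hg : Ck 1 m g.
Hypothesis Hgam : forall c, (c < m)%nat -> derivable_pt_lim (fun t => gam t c) t0 (gam' c).

Let z n t := fun k => if Nat.ltb k n then gam t k else gam t0 k.

Lemma z_t0 n : z n t0 = gam t0.
Proof. apply functional_extensionality. intro k. unfold z. destruct (Nat.ltb k n); auto. Qed.

Lemma z_S n t : z (S n) t = upd (z n t) n (gam t n).
Proof. apply functional_extensionality. intro k. unfold z, upd.
  destruct (Nat.eqb k n) eqn:E.
  - apply Nat.eqb_eq in E; subst. replace (Nat.ltb n (S n)) with true; auto. symmetry; apply Nat.ltb_lt; lia.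
  - apply Nat.eqb_neq in E. destruct (Nat.ltb k (S n)) eqn:E1; destruct (Nat.ltb k n) eqn:E2; auto.
    + apply Nat.ltb_lt in E1; apply Nat.ltb_ge in E2; lia.
    + apply Nat.ltb_ge in E1; apply Nat.ltb_lt in E2; lia.
Qed.

Lemma z_n n t : z n t = upd (z n t) n (gam t0 n).
Proof. apply functional_extensionality. intro k. unfold z, upd.
  destruct (Nat.eqb k n) eqn:E; auto.
  apply Nat.eqb_eq in E; subst. destruct (Nat.ltb n n) eqn:E1; auto. apply Nat.ltb_lt in E1; lia. Qed.

Lemma step c : (c < m)%nat ->
  derivable_pt_lim (fun t => g (z (S c) t) - g (z c t)) t0 (pd g c (gam t0) * gam' c).
Proof.
  intros Hc eps He.
  set (p := pd g c (gam t0)). set (q := gam' c).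
  assert (Pq : 0 < 2 * (Rabs q + 1)) by (pose proof (Rabs_pos q); lra).
  assert (Pp : 0 < 2 * (Rabs p + 1)) by (pose proof (Rabs_pos p); lra).
  assert (Cpd : cont_d m (pd g c)) by (apply (Ck_pd 0); auto).
  destruct (Cpd (gam t0) (eps / (2 * (Rabs q + 1)))) as [dc [Hdc Hcont]].
  { apply Rdiv_lt_0_compat; lra. }
  destruct (fin_delta m (fun k h => Rabs (gam (t0 + h) k - gam t0 k) < dc)) as [dg [Hdg Hgc]].
  { intros k Hk. apply (dlim_cont (fun t => gam t k) t0 (gam' k)); auto. }
  destruct (Hgam c Hc (Rmin 1 (eps / (2 * (Rabs p + 1))))) as [dq Hdq].
  { apply Rmin_pos; [lra| apply Rdiv_lt_0_compat; lra]. }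
  assert (Hdq' : 0 < dq) by apply cond_pos.
  exists (mkposreal _ (Rmin_pos _ _ Hdg Hdq')). simpl. intros h Hn Hh.
  assert (Hh1 : Rabs h < dg) by (eapply Rlt_le_trans; [exact Hh|apply Rmin_l]).
  assert (Hh2 : Rabs h < dq) by (eapply Rlt_le_trans; [exact Hh|apply Rmin_r]).
  specialize (Hdq h Hn Hh2). simpl in Hdq. fold q in Hdq.
  set (t := t0 + h) in *.
  rewrite !z_t0. replace (g (gam t0) - g (gam t0)) with 0 by ring.
  rewrite z_S. pattern (z c t) at 2. rewrite (z_n c t).
  set (zz := z c t).
  destruct (MVT_gen (fun s => g (upd zz c s)) (fun s => pd g c (upd zz c s)) (gam t0 c) (gam t c))
    as [xi [Hxi E]].
  { intros s _. assert (A := Ck_partial 0 m g c (upd zz c s) Hg Hc).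
    unfold partial_is in A. rewrite upd_eq in A.
    eapply derivable_pt_lim_ext; [|exact A]. intro u. simpl. rewrite upd_upd. auto. }
  simpl in E. rewrite E.
  set (w := upd zz c xi).
  assert (Hw : Rabs (pd g c w - p) < eps / (2 * (Rabs q + 1))).
  { apply Hcont. intros k Hk. unfold w, zz, z, upd.
    destruct (Nat.eqb k c) eqn:E1.
    - apply Nat.eqb_eq in E1; subst k. specialize (Hgc h Hh1 c Hc). simpl in Hgc. fold t in Hgc.
      unfold Rmin, Rmax in Hxi. destruct (Rle_dec (gam t0 c) (gam t c));
      [rewrite Rabs_right in Hgc |- *; lra|].
      rewrite Rabs_left1 in Hgc; [|lra]. rewrite Rabs_left1; lra.
    - destruct (Nat.ltb k c).
      + apply Hgc; auto.
      + replace (gam t0 k - gam t0 k) with 0 by ring. rewrite Rabs_R0; auto. }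
  set (r := (gam t c - gam t0 c) / h) in Hdq.
  match goal with |- Rabs ?X < eps => replace X with
     ((pd g c w - p) * r + p * (r - q)) by (unfold r; field; auto) end.
  assert (R1 : Rabs (r - q) < 1) by (eapply Rlt_le_trans; [exact Hdq|apply Rmin_l]).
  assert (R2 : Rabs (r - q) < eps / (2 * (Rabs p + 1))) by (eapply Rlt_le_trans; [exact Hdq|apply Rmin_r]).
  assert (R3 : Rabs r < Rabs q + 1).
  { replace r with ((r - q) + q) by ring. eapply Rle_lt_trans; [apply Rabs_triang|]. lra. }
  eapply Rle_lt_trans; [apply Rabs_triang|]. rewrite !Rabs_mult.
  assert (T1 : Rabs (pd g c w - p) * Rabs r <= eps / 2).
  { apply Rmult_lt_compat_r with (r := 2 * (Rabs q + 1)) in Hw; [|lra].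
    unfold Rdiv in Hw. rewrite Rmult_assoc, Rinv_l in Hw by lra.
    pose proof (Rabs_pos r); pose proof (Rabs_pos (pd g c w - p)). nra. }
  assert (T2 : Rabs p * Rabs (r - q) < eps / 2).
  { apply Rmult_lt_compat_r with (r := 2 * (Rabs p + 1)) in R2; [|lra].
    unfold Rdiv in R2. rewrite Rmult_assoc, Rinv_l in R2 by lra.
    pose proof (Rabs_pos p); pose proof (Rabs_pos (r - q)). nra. }
  lra.
Qed.

Lemma telescope n (G : nat -> R) : rsum n (fun c => G (S c) - G c) = G n - G O.
Proof. induction n; simpl; [ring| rewrite IHn; ring]. Qed.

Lemma chain_aux :
  derivable_pt_lim (fun t => g (gam t)) t0 (rsum m (fun c => pd g c (gam t0) * gam' c)).
Proof.
  assert (D := dlim_rsum m (fun c t => g (z (S c) t) - g (z c t)) t0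
                 (fun c => pd g c (gam t0) * gam' c) (fun c Hc => step c Hc)).
  assert (D2 := dlim_plus _ _ t0 _ _ D (derivable_pt_lim_const (g (gam t0)) t0)).
  rewrite Rplus_0_r in D2.
  eapply derivable_pt_lim_ext; [|exact D2]. intro t. simpl.
  rewrite (telescope m (fun c => g (z c t))).
  replace (z 0 t) with (gam t0).
  2:{ apply functional_extensionality; intro k; unfold z; destruct (Nat.ltb k 0) eqn:E; auto.
      apply Nat.ltb_lt in E; lia. }
  unfold fct_cte. rewrite (cont_dep m g (gam t) (z m t)); [ring| apply (Ck_cont 1); auto|].
  intros k Hk. unfold z. rewrite (proj2 (Nat.ltb_lt k m) Hk). auto.
Qed.
End Chain.

Lemma chain m g gam t0 gam' : Ck 1 m g ->
  (forall c, (c < m)%nat -> derivable_pt_lim (fun t => gam t c) t0 (gam' c)) ->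
  derivable_pt_lim (fun t => g (gam t)) t0 (rsum m (fun c => pd g c (gam t0) * gam' c)).
Proof. intros. apply chain_aux; auto. Qed.

Ltac rext := apply rsum_ext_lt; intros.

Lemma partial_val g i x l l' : partial_is g i x l -> l = l' -> partial_is g i x l'.
Proof. intros H ->; auto. Qed.

Lemma partial_scal a g i x l : partial_is g i x l -> partial_is (fun y => a * g y) i x (a * l).
Proof. intros H. eapply partial_val; [apply partial_mult; [apply partial_const|exact H]|cbv beta; ring]. Qed.

Lemma partial_zero_fun g i x l : (forall y, g y = 0) -> partial_is g i x l -> l = 0.
Proof.
  intros Hz H. assert (H0 : partial_is g i x 0).
  { eapply partial_ext; [|apply (partial_const 0)]. intros; rewrite Hz; auto. }
  rewrite <- (pd_eq _ _ _ _ H), (pd_eq _ _ _ _ H0). auto.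
Qed.

Section Key.
Variables (d m : nat) (A : nat -> nat -> R) (S : nat -> nat -> R)
  (f : (nat -> R) -> (nat -> R)) (vs : (nat -> R) -> (nat -> R)).
Hypothesis Hf : CkV 1 m m f.
Hypothesis Hvs : CkV 3 d m vs.
Hypothesis Hpde : forall (x : nat -> R) c, (c < m)%nat ->
    rsum m (fun c' => A c c' *
              rsum d (fun i => pd (pd (fun y => vs y c') i) i x))
    + rsum d (fun i => rsum d (fun j => S i j * x j * pd (fun y => vs y c) i x))
    + f (vs x) c = 0.

Local Notation vsc c := (fun y : nat -> R => vs y c).

Lemma C3 c : (c < m)%nat -> Ck 3 d (vsc c).
Proof. intros; apply Hvs; auto. Qed.
Lemma C2 c i : (c < m)%nat -> (i < d)%nat -> Ck 2 d (pd (vsc c) i).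
Proof. intros; apply Ck_pd; auto; apply C3; auto. Qed.
Lemma C1 c i j : (c < m)%nat -> (i < d)%nat -> (j < d)%nat -> Ck 1 d (pd (pd (vsc c) i) j).
Proof. intros; apply Ck_pd; auto; apply C2; auto. Qed.
Lemma p1 c i x : (c < m)%nat -> (i < d)%nat -> partial_is (vsc c) i x (pd (vsc c) i x).
Proof. intros; apply (Ck_partial 2 d); auto; apply C3; auto. Qed.
Lemma p2 c i j x : (c < m)%nat -> (i < d)%nat -> (j < d)%nat ->
  partial_is (pd (vsc c) i) j x (pd (pd (vsc c) i) j x).
Proof. intros; apply (Ck_partial 1 d); auto; apply C2; auto. Qed.
Lemma p3 c i j k x : (c < m)%nat -> (i < d)%nat -> (j < d)%nat -> (k < d)%nat ->
  partial_is (pd (pd (vsc c) i) j) k x (pd (pd (pd (vsc c) i) j) k x).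
Proof. intros; apply (Ck_partial 0 d); auto; apply C1; auto. Qed.

Lemma sw1 c i j : (c < m)%nat -> (i < d)%nat -> (j < d)%nat ->
  pd (pd (vsc c) i) j = pd (pd (vsc c) j) i.
Proof. intros. apply schwarz_fun with d; auto. apply Ck_S, C3; auto. Qed.

Lemma sw3 c i j : (c < m)%nat -> (i < d)%nat -> (j < d)%nat ->
  pd (pd (pd (vsc c) j) i) i = pd (pd (pd (vsc c) i) i) j.
Proof. intros. rewrite sw1 by auto.
  apply schwarz_fun with d; auto. apply C2; auto. Qed.

Lemma dpde x c j : (c < m)%nat -> (j < d)%nat ->
  rsum m (fun c' => A c c' * rsum d (fun i => pd (pd (pd (vsc c') i) i) j x))
  + rsum d (fun i => rsum d (fun a => S i a * x a * pd (pd (vsc c) j) i x))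
  + rsum d (fun i => S i j * pd (vsc c) i x)
  + rsum m (fun c' => pd (fun y => f y c) c' (vs x) * pd (vsc c') j x) = 0.
Proof.
  intros Hc Hj.
  set (Phi := fun y : nat -> R =>
    rsum m (fun c' => A c c' * rsum d (fun i => pd (pd (fun y => vs y c') i) i y))
    + rsum d (fun i => rsum d (fun j => S i j * y j * pd (fun y => vs y c) i y))
    + f (vs y) c).
  assert (HP : partial_is Phi j x
    (rsum m (fun c' => A c c' * rsum d (fun i => pd (pd (pd (vsc c') i) i) j x))
     + rsum d (fun i => rsum d (fun a => S i a * x a * pd (pd (vsc c) i) j x) + S i j * pd (vsc c) i x)
     + rsum m (fun c' => pd (fun y => f y c) c' (vs x) * pd (vsc c') j x))).
  { apply partial_plus; [apply partial_plus|].
    - apply partial_rsum. intros c' Hc'. apply partial_scal. apply partial_rsum.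
      intros i Hi. apply p3; auto.
    - apply partial_rsum. intros i Hi.
      eapply partial_val.
      + apply partial_rsum. intros a Ha. apply partial_mult.
        * apply partial_scal. apply partial_coord.
        * apply p2; auto.
      + rewrite <- (rsum_delta' d j (fun a => S i a * pd (vsc c) i x)) by auto.
        rewrite <- rsum_plus. rext. ring.
    - unfold partial_is.
      assert (Ch := chain m (fun y => f y c) (fun t => vs (upd x j t)) (x j)
                     (fun c' => pd (vsc c') j x) (Hf c Hc)).
      cbv beta in Ch. rewrite upd_same in Ch. apply Ch. intros c' Hc'.
      apply p1; auto. }
  apply partial_zero_fun in HP; [|intros y; apply Hpde; auto].
  rewrite <- HP. rewrite rsum_plus. 
  replace (rsum d (fun i => rsum d (fun a => S i a * x a * pd (pd (vsc c) j) i x)))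
    with (rsum d (fun i => rsum d (fun a => S i a * x a * pd (pd (vsc c) i) j x))); [ring|].
  rext. rext. rewrite sw1 by auto. auto.
Qed.

Variables (M : nat -> nat -> R) (be : nat -> R).
Hypothesis HM : forall i j, (i < d)%nat -> (j < d)%nat -> M j i = - M i j.

Definition W (x : nat -> R) j := rsum d (fun k => M j k * x k) + be j.
Definition Vr c := fun x : nat -> R => rsum d (fun j => pd (vsc c) j x * W x j).

Lemma partial_W x i j : (i < d)%nat -> partial_is (fun y => W y j) i x (M j i).
Proof. intros Hi. unfold W. eapply partial_val.
  - apply partial_plus; [|apply partial_const]. apply partial_rsum. intros k _.
    apply partial_scal. apply partial_coord.
  - rewrite Rplus_0_r. apply rsum_delta'; auto. Qed.

Lemma Ck_W k j : Ck k d (fun y => W y j).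
Proof. unfold W. apply Ck_plus; [|apply Ck_const]. apply Ck_rsum. intros.
  apply Ck_mult; [apply Ck_const|apply Ck_coord; auto]. Qed.

Lemma pd_Vr c i : (c < m)%nat -> (i < d)%nat ->
  pd (Vr c) i = fun x => rsum d (fun j => pd (pd (vsc c) j) i x * W x j + pd (vsc c) j x * M j i).
Proof. intros Hc Hi. apply pd_ext_fun. intros x. unfold Vr. apply partial_rsum. intros j Hj.
  apply partial_mult; [|apply partial_W; auto].
  apply p2; auto. Qed.

Lemma pd2_Vr c i : (c < m)%nat -> (i < d)%nat ->
  pd (pd (Vr c) i) i = fun x => rsum d (fun j => pd (pd (pd (vsc c) j) i) i x * W x j
      + pd (pd (vsc c) j) i x * M j i + pd (pd (vsc c) j) i x * M j i).
Proof. intros Hc Hi. rewrite pd_Vr by auto. apply pd_ext_fun. intros x. apply partial_rsum. intros j Hj.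
  eapply partial_val.
  - apply partial_plus; [apply partial_mult|apply partial_mult].
    + apply p3; auto.
    + apply partial_W; auto.
    + apply p2; auto.
    + apply partial_const.
  - cbv beta. ring. Qed.

Lemma Ck_Vr c : (c < m)%nat -> Ck 2 d (Vr c).
Proof. intros Hc. unfold Vr. apply Ck_rsum. intros j Hj. apply Ck_mult; [|apply Ck_W].
  apply C2; auto. Qed.

Definition L3 j c x := rsum d (fun i => pd (pd (pd (vsc c) i) i) j x).

Lemma lap_Vr c x : (c < m)%nat ->
  rsum d (fun i => pd (pd (Vr c) i) i x) = rsum d (fun j => W x j * L3 j c x).
Proof.
  intros Hc.
  transitivity (rsum d (fun i => rsum d (fun j => pd (pd (pd (vsc c) j) i) i x * W x j))
       + 2 * rsum d (fun i => rsum d (fun j => pd (pd (vsc c) j) i x * M j i))).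
  { rewrite rsum_mult_l, <- rsum_plus. rext. rewrite pd2_Vr by auto.
    rewrite rsum_mult_l, <- rsum_plus. rext. ring. }
  rewrite (rsum_antisym d (fun i j => pd (pd (vsc c) j) i x * M j i)).
  2:{ intros i j Hi Hj. rewrite sw1 by auto. rewrite (HM j i) by auto. ring. }
  rewrite rsum_swap. unfold L3. rewrite Rmult_0_r, Rplus_0_r. rext.
  rewrite rsum_mult_l. rext. rewrite sw3 by auto. ring.
Qed.

Lemma key x c : (c < m)%nat ->
  rsum m (fun c' => A c c' * rsum d (fun i => pd (pd (Vr c') i) i x))
  + rsum d (fun i => rsum d (fun a => S i a * x a * pd (Vr c) i x))
  + rsum m (fun c' => pd (fun y => f y c) c' (vs x) * Vr c' x)
  = rsum d (fun i => pd (vsc c) i x *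
      (rsum d (fun k => rsum d (fun a => M i a * S a k) * x k) - rsum d (fun j => S i j * W x j))).
Proof.
  intros Hc.
  pose (F c' := pd (fun y => f y c) c' (vs x)).
  pose (D j c' := pd (vsc c') j x).
  pose (H i j := pd (pd (vsc c) j) i x).
  assert (T1 : rsum m (fun c' => A c c' * rsum d (fun i => pd (pd (Vr c') i) i x))
     = rsum d (fun j => W x j * rsum m (fun c' => A c c' * L3 j c' x))).
  { transitivity (rsum m (fun c' => rsum d (fun j => W x j * (A c c' * L3 j c' x)))).
    - rext. rewrite lap_Vr by auto. rewrite rsum_mult_l. rext. ring.
    - rewrite rsum_swap. rext. rewrite rsum_mult_l. auto. }
  assert (T2 : rsum d (fun i => rsum d (fun a => S i a * x a * pd (Vr c) i x))
     = rsum d (fun j => W x j * rsum d (fun i => rsum d (fun a => S i a * x a * H i j)))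
       + rsum d (fun i => rsum d (fun a => rsum d (fun j => S i a * x a * (D j c * M j i))))).
  { transitivity (rsum d (fun i => rsum d (fun a => rsum d (fun j => W x j * (S i a * x a * H i j))))
       + rsum d (fun i => rsum d (fun a => rsum d (fun j => S i a * x a * (D j c * M j i))))).
    - rewrite <- rsum_plus. rext. rewrite <- rsum_plus. rext. rewrite pd_Vr by auto.
      rewrite rsum_mult_l, <- rsum_plus. rext. unfold H, D. ring.
    - f_equal. transitivity (rsum d (fun i => rsum d (fun j => rsum d (fun a => W x j * (S i a * x a * H i j))))).
      + rext. apply rsum_swap.
      + rewrite rsum_swap. rext. rewrite rsum_mult_l. rext. rewrite rsum_mult_l. auto. }
  assert (T3 : rsum m (fun c' => pd (fun y => f y c) c' (vs x) * Vr c' x) = rsum d (fun j => W x j * rsum m (fun c' => F c' * D j c'))).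
  { transitivity (rsum m (fun c' => rsum d (fun j => W x j * (F c' * D j c')))).
    - rext. unfold Vr. rewrite rsum_mult_l. rext. unfold D, F. ring.
    - rewrite rsum_swap. rext. rewrite rsum_mult_l. auto. }
  rewrite T1, T2, T3.
  assert (P : forall j, (j < d)%nat ->
     rsum m (fun c' => A c c' * L3 j c' x) + rsum d (fun i => rsum d (fun a => S i a * x a * H i j))
     + rsum m (fun c' => F c' * D j c') = - rsum d (fun i => S i j * D i c)).
  { intros j Hj. pose proof (dpde x c j Hc Hj) as E. unfold L3, H, F, D. lra. }
  transitivity (rsum d (fun j => W x j * (- rsum d (fun i => S i j * D i c)))
     + rsum d (fun i => rsum d (fun a => rsum d (fun j => S i a * x a * (D j c * M j i))))).
  { assert (C : rsum d (fun j => W x j * rsum m (fun c' => A c c' * L3 j c' x))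
        + rsum d (fun j => W x j * rsum d (fun i => rsum d (fun a => S i a * x a * H i j)))
        + rsum d (fun j => W x j * rsum m (fun c' => F c' * D j c'))
        = rsum d (fun j => W x j * (- rsum d (fun i => S i j * D i c)))).
    { rewrite <- !rsum_plus. rext. rewrite <- P by auto. ring. }
    rewrite <- C. ring. }
  assert (PA : rsum d (fun j => W x j * (- rsum d (fun i => S i j * D i c)))
     = - rsum d (fun i => D i c * rsum d (fun j => S i j * W x j))).
  { rewrite <- rsum_opp.
    transitivity (rsum d (fun j => rsum d (fun i => - (D i c * (S i j * W x j))))).
    - rext. rewrite Ropp_mult_distr_r_reverse. rewrite rsum_mult_l, <- rsum_opp. rext. ring.
    - rewrite rsum_swap. rext. rewrite rsum_mult_l, <- rsum_opp. auto. }
  assert (PB : rsum d (fun i => rsum d (fun a => rsum d (fun j => S i a * x a * (D j c * M j i))))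
     = rsum d (fun i => D i c * rsum d (fun k => rsum d (fun a => M i a * S a k) * x k))).
  { transitivity (rsum d (fun j => rsum d (fun a => rsum d (fun i => S i a * x a * (D j c * M j i))))).
    - rewrite rsum_swap. transitivity (rsum d (fun a => rsum d (fun j => rsum d (fun i => S i a * x a * (D j c * M j i))))).
      + rext. apply rsum_swap.
      + apply rsum_swap.
    - rext. rewrite rsum_mult_l. rext. rewrite rsum_mult_r, rsum_mult_l. rext. ring. }
  rewrite PA, PB. rewrite <- rsum_opp, <- rsum_plus. rext. unfold D. ring.
Qed.
End Key.

Module LA.
Import all_boot all_algebra Rstruct complex.
Import GRing.Theory Num.Theory.
Local Open Scope ring_scope.

Definition toC (z : Cx) : R[i] := (Defs.Re z +i* Defs.Im z)%C.

Lemma toC_add z w : toC (Cxadd z w) = toC z + toC w.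
Proof. reflexivity. Qed.
Lemma toC_mul z w : toC (Cxmul z w) = toC z * toC w.
Proof. reflexivity. Qed.
Lemma toC_conj z : toC (Cxconj z) = conjc (toC z).
Proof. reflexivity. Qed.
Lemma toC0 : toC Cx0 = 0.
Proof. reflexivity. Qed.
Lemma toC1 : toC Cx1 = 1.
Proof. reflexivity. Qed.
Lemma toC_inj z w : toC z = toC w -> z = w.
Proof. case: z => a b; case: w => c e; rewrite /toC /= => [[-> ->]]. by []. Qed.

Lemma toC_sum n f : toC (Cxsum n f) = \sum_(k < n) toC (f k).
Proof.
  elim: n => [|n IH]; first by rewrite big_ord0.
  by rewrite big_ord_recr /= toC_add IH.
Qed.

Section E.
Variables (d : nat) (U : nat -> nat -> Cx) (S : nat -> nat -> R) (lam : nat -> Cx).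
Hypothesis HU : unitary d U.
Hypothesis HD : diagonalizes d U S lam.

Let Um : 'M[R[i]]_d := \matrix_(i < d, j < d) toC (U i j).
Let UH : 'M[R[i]]_d := \matrix_(i < d, j < d) conjc (toC (U j i)).
Let Sm : 'M[R[i]]_d := \matrix_(i < d, j < d) toC (RtoCx (S i j)).
Let Lm : 'M[R[i]]_d := \matrix_(i < d, j < d) toC (if Nat.eqb i j then lam i else Cx0).

Lemma UHU : UH *m Um = 1%:M.
Proof.
  apply/matrixP => i j. rewrite !mxE.
  have := HU i j (elimT ltP (ltn_ord i)) (elimT ltP (ltn_ord j)).
  move/(congr1 toC). rewrite toC_sum => E.
  rewrite (eq_bigr (fun k : 'I_d => toC (Cxmul (Cxconj (U k i)) (U k j)))); last first.
    by move=> k _; rewrite !mxE toC_mul toC_conj.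
  rewrite E. case: (Nat.eqb_spec i j) => [/val_inj -> | Hne].
    by rewrite eqxx toC1.
  have -> : (i == j) = false by apply/eqP => H; apply: Hne; rewrite H.
  by rewrite toC0.
Qed.

Lemma UUH : Um *m UH = 1%:M.
Proof. apply: mulmx1C. exact: UHU. Qed.

Lemma UHSUm : UH *m Sm *m Um = Lm.
Proof.
  apply/matrixP => i j. rewrite !mxE.
  have := HD i j (elimT ltP (ltn_ord i)) (elimT ltP (ltn_ord j)). rewrite /UHSU.
  move/(congr1 toC). rewrite toC_sum => E.
  rewrite -E.
  under eq_bigr => l _ do rewrite !mxE big_distrl /=.
  rewrite exchange_big /=. apply: eq_bigr => k _.
  rewrite toC_sum. apply: eq_bigr => l _. by rewrite !mxE !toC_mul toC_conj.
Qed.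

Lemma SU : Sm *m Um = Um *m Lm.
Proof. by rewrite -UHSUm !mulmxA UUH mul1mx. Qed.

Lemma eigvec_aux (l p : 'I_d) :
  Cxsum d (fun k => Cxmul (RtoCx (S p k)) (U k l)) = Cxmul (U p l) (lam l).
Proof.
  apply: toC_inj. rewrite toC_sum toC_mul.
  have := congr1 (fun M : 'M[R[i]]_d => M p l) SU. rewrite !mxE /= => E.
  rewrite (eq_bigr (fun k : 'I_d => Sm p k * Um k l)); last first.
    by move=> k _; rewrite !mxE toC_mul.
  rewrite E (bigD1 l) //= big1 ?addr0; last first.
    move=> k Hk. rewrite !mxE. case: (Nat.eqb_spec k l) => [/val_inj H|_].
      by rewrite H eqxx in Hk.
    by rewrite toC0 mulr0.
  rewrite !mxE. by rewrite Nat.eqb_refl.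
Qed.
Lemma eigvec_nat (l p : nat) (Hl : Peano.lt l d) (Hp : Peano.lt p d) :
  Cxsum d (fun k => Cxmul (RtoCx (S p k)) (U k l)) = Cxmul (U p l) (lam l).
Proof. exact (eigvec_aux (Ordinal (introT ltP Hl)) (Ordinal (introT ltP Hp))). Qed.
End E.
End LA.

Lemma eigvec d U S lam : unitary d U -> diagonalizes d U S lam ->
  forall l p, (l < d)%nat -> (p < d)%nat ->
  Cxsum d (fun k => Cxmul (RtoCx (S p k)) (U k l)) = Cxmul (U p l) (lam l).
Proof.
  intros HU HD l p Hl Hp.
  exact (LA.eigvec_nat d U S lam HU HD l p Hl Hp).
Qed.


Lemma Cx_ring : ring_theory Cx0 Cx1 Cxadd Cxmul Cxsub Cxopp (@eq Cx).
Proof. constructor; intros; apply Cx_eq; simpl; ring. Qed.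
Add Ring CxRing : Cx_ring.

Lemma Cxsum_ext_lt n f g : (forall k, (k < n)%nat -> f k = g k) -> Cxsum n f = Cxsum n g.
Proof. induction n; simpl; intros H; auto. rewrite IHn by (intros; apply H; lia). rewrite H by lia; auto. Qed.
Lemma Cxsum_opp n f : Cxsum n (fun k => Cxopp (f k)) = Cxopp (Cxsum n f).
Proof. induction n; simpl; [apply Cx_eq; simpl; ring|rewrite IHn; ring]. Qed.
Lemma Cxsum_minus n f g : Cxsum n (fun k => Cxsub (f k) (g k)) = Cxsub (Cxsum n f) (Cxsum n g).
Proof. induction n; simpl; [apply Cx_eq; simpl; ring|rewrite IHn; ring]. Qed.
Lemma Cxsum_mult_l n c f : Cxmul c (Cxsum n f) = Cxsum n (fun k => Cxmul c (f k)).
Proof. induction n; simpl; [apply Cx_eq; simpl; ring|rewrite <- IHn; ring]. Qed.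
Lemma Cxsum_mult_r n c f : Cxmul (Cxsum n f) c = Cxsum n (fun k => Cxmul (f k) c).
Proof. induction n; simpl; [apply Cx_eq; simpl; ring|rewrite <- IHn; ring]. Qed.
Lemma Cxsum_zero n f : (forall k, (k < n)%nat -> f k = Cx0) -> Cxsum n f = Cx0.
Proof. induction n; simpl; intros H; auto. rewrite IHn, H by (intros; try apply H; lia). ring. Qed.

Lemma eigT d U S lam : skew d S -> unitary d U -> diagonalizes d U S lam ->
  forall l k, (l < d)%nat -> (k < d)%nat ->
  Cxsum d (fun a => Cxmul (U a l) (RtoCx (S a k))) = Cxopp (Cxmul (U k l) (lam l)).
Proof.
  intros HS HU HD l k Hl Hk. rewrite <- (eigvec d U S lam HU HD l k Hl Hk).
  rewrite <- Cxsum_opp. apply Cxsum_ext_lt. intros a Ha.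
  apply Cx_eq; simpl; rewrite (HS k a) by auto; ring.
Qed.

Lemma re_lam d U S lam : skew d S -> diagonalizes d U S lam ->
  forall l, (l < d)%nat -> Re (lam l) = 0.
Proof.
  intros HS HD l Hl. pose proof (HD l l Hl Hl) as E. rewrite Nat.eqb_refl in E.
  rewrite <- E. unfold UHSU. rewrite Re_Cxsum.
  transitivity (rsum d (fun k => rsum d (fun l' =>
     Re (Cxmul (Cxmul (Cxconj (U k l)) (RtoCx (S k l'))) (U l' l))))).
  { rext. rewrite Re_Cxsum. auto. }
  apply rsum_antisym. intros i j Hi Hj. simpl. rewrite (HS i j) by auto. ring.
Qed.

Lemma rel_lemma d S P Q pb qb r s :
  (forall p k, (p < d)%nat -> (k < d)%nat ->
     r * P p k - s * Q p k = rsum d (fun a => P p a * S a k) - rsum d (fun a => S p a * P a k)) ->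
  (forall p, (p < d)%nat -> r * pb p - s * qb p = - rsum d (fun a => S p a * pb a)) ->
  forall x p, (p < d)%nat ->
  r * W d P pb x p - s * W d Q qb x p =
  rsum d (fun k => rsum d (fun a => P p a * S a k) * x k) - rsum d (fun j => S p j * W d P pb x j).
Proof.
  intros H1 H2 x p Hp. unfold W.
  transitivity (rsum d (fun k => (r * P p k - s * Q p k) * x k) + (r * pb p - s * qb p)).
  { rewrite !Rmult_plus_distr_l, !rsum_mult_l.
    replace (rsum d (fun k => (r * P p k - s * Q p k) * x k)) with
      (rsum d (fun k => r * (P p k * x k)) - rsum d (fun k => s * (Q p k * x k))); [ring|].
    rewrite <- rsum_minus. rext. ring. }
  rewrite H2 by auto.
  transitivity (rsum d (fun k => (rsum d (fun a => P p a * S a k) - rsum d (fun a => S p a * P a k)) * x k)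
     - rsum d (fun a => S p a * pb a)).
  { assert (rsum d (fun k => (r * P p k - s * Q p k) * x k) = rsum d (fun k => (rsum d (fun a => P p a * S a k) - rsum d (fun a => S p a * P a k)) * x k)) by (rext; rewrite H1; auto).
    lra. }
  assert (E : rsum d (fun j => S p j * (rsum d (fun k => P j k * x k) + pb j))
     = rsum d (fun k => rsum d (fun a => S p a * P a k) * x k) + rsum d (fun a => S p a * pb a)).
  { transitivity (rsum d (fun j => rsum d (fun k => S p j * P j k * x k)) + rsum d (fun a => S p a * pb a)).
    - rewrite <- rsum_plus. rext. rewrite Rmult_plus_distr_l, rsum_mult_l. f_equal. rext. ring.
    - f_equal. rewrite rsum_swap. rext. rewrite rsum_mult_r. auto. }
  rewrite E.
  assert (rsum d (fun k => (rsum d (fun a => P p a * S a k) - rsum d (fun a => S p a * P a k)) * x k)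
    = rsum d (fun k => rsum d (fun a => P p a * S a k) * x k) - rsum d (fun k => rsum d (fun a => S p a * P a k) * x k))
    by (rewrite <- rsum_minus; rext; ring).
  lra.
Qed.

Lemma Re_sub z w : Re (Cxsub z w) = Re z - Re w. Proof. simpl. ring. Qed.
Lemma Im_sub z w : Im (Cxsub z w) = Im z - Im w. Proof. simpl. ring. Qed.
Lemma Re_add z w : Re (Cxadd z w) = Re z + Re w. Proof. reflexivity. Qed.
Lemma Im_add z w : Im (Cxadd z w) = Im z + Im w. Proof. reflexivity. Qed.
Lemma Re_mul z w : Re (Cxmul z w) = Re z * Re w - Im z * Im w. Proof. reflexivity. Qed.
Lemma Im_mul z w : Im (Cxmul z w) = Re z * Im w + Im z * Re w. Proof. reflexivity. Qed.
Lemma Re_rmul a z : Re (Cxmul (RtoCx a) z) = a * Re z. Proof. simpl. ring. Qed.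
Lemma Im_rmul a z : Im (Cxmul (RtoCx a) z) = a * Im z. Proof. simpl. ring. Qed.
Lemma Re_mulr z a : Re (Cxmul z (RtoCx a)) = Re z * a. Proof. simpl. ring. Qed.
Lemma Im_mulr z a : Im (Cxmul z (RtoCx a)) = Im z * a. Proof. simpl. ring. Qed.

Section T.
Variables (d m : nat) (A S : nat -> nat -> R) (f : (nat -> R) -> nat -> R) (vs : (nat -> R) -> nat -> R).
Variable (v : (nat -> R) -> nat -> Cx) (x : nat -> R) (c : nat).
Lemma ReT1 : Re (Cxsum m (fun c' => Cxmul (RtoCx (A c c'))
              (Cxsum d (fun i => pdC (fun y => pdC (fun z => v z c') i y) i x))))
  = rsum m (fun c' => A c c' * rsum d (fun i => pd (pd (fun z => Re (v z c')) i) i x)).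
Proof. rewrite Re_Cxsum. rext. rewrite Re_rmul, Re_Cxsum. reflexivity. Qed.
Lemma ImT1 : Im (Cxsum m (fun c' => Cxmul (RtoCx (A c c'))
              (Cxsum d (fun i => pdC (fun y => pdC (fun z => v z c') i y) i x))))
  = rsum m (fun c' => A c c' * rsum d (fun i => pd (pd (fun z => Im (v z c')) i) i x)).
Proof. rewrite Im_Cxsum. rext. rewrite Im_rmul, Im_Cxsum. reflexivity. Qed.
Lemma ReT2 : Re (Cxsum d (fun i => Cxsum d (fun j =>
              Cxmul (RtoCx (S i j * x j)) (pdC (fun y => v y c) i x))))
  = rsum d (fun i => rsum d (fun j => S i j * x j * pd (fun y => Re (v y c)) i x)).
Proof. rewrite Re_Cxsum. rext. rewrite Re_Cxsum. rext. rewrite Re_rmul. reflexivity. Qed.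
Lemma ImT2 : Im (Cxsum d (fun i => Cxsum d (fun j =>
              Cxmul (RtoCx (S i j * x j)) (pdC (fun y => v y c) i x))))
  = rsum d (fun i => rsum d (fun j => S i j * x j * pd (fun y => Im (v y c)) i x)).
Proof. rewrite Im_Cxsum. rext. rewrite Im_Cxsum. rext. rewrite Im_rmul. reflexivity. Qed.
Lemma ReT3 : Re (Cxsum m (fun c' =>
              Cxmul (RtoCx (pd (fun y => f y c) c' (vs x))) (v x c')))
  = rsum m (fun c' => pd (fun y => f y c) c' (vs x) * Re (v x c')).
Proof. rewrite Re_Cxsum. rext. rewrite Re_rmul. reflexivity. Qed.
Lemma ImT3 : Im (Cxsum m (fun c' =>
              Cxmul (RtoCx (pd (fun y => f y c) c' (vs x))) (v x c')))
  = rsum m (fun c' => pd (fun y => f y c) c' (vs x) * Im (v x c')).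
Proof. rewrite Im_Cxsum. rext. rewrite Im_rmul. reflexivity. Qed.
End T.

Section Gen.
Variables (d m : nat) (A S : nat -> nat -> R) (f : (nat -> R) -> nat -> R) (vs : (nat -> R) -> nat -> R).
Hypothesis Hf : CkV 1 m m f.
Hypothesis Hvs : CkV 3 d m vs.
Hypothesis Hpde : forall (x : nat -> R) c, (c < m)%nat ->
    rsum m (fun c' => A c c' *
              rsum d (fun i => pd (pd (fun y => vs y c') i) i x))
    + rsum d (fun i => rsum d (fun j => S i j * x j * pd (fun y => vs y c) i x))
    + f (vs x) c = 0.
Variables (E : nat -> nat -> Cx) (b : nat -> Cx) (lm : Cx).
Hypothesis HE : forall p k, (p < d)%nat -> (k < d)%nat -> E k p = Cxopp (E p k).
Hypothesis Hrel : forall p k, (p < d)%nat -> (k < d)%nat ->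
  Cxmul lm (E p k) = Cxsub (Cxsum d (fun a => Cxmul (E p a) (RtoCx (S a k))))
                           (Cxsum d (fun a => Cxmul (RtoCx (S p a)) (E a k))).
Hypothesis Hrelb : forall p, (p < d)%nat ->
  Cxmul lm (b p) = Cxopp (Cxsum d (fun a => Cxmul (RtoCx (S p a)) (b a))).

Let ReE a k := Re (E a k).
Let ImE a k := Im (E a k).
Let Reb a := Re (b a).
Let Imb a := Im (b a).
Let v := vfun d vs E b.

Lemma ReV c : (fun z => Re (v z c)) = Vr d vs ReE Reb c.
Proof. apply functional_extensionality. intro z. unfold v, vfun, Vr, W.
  rewrite Re_Cxsum. rext. rewrite Re_rmul, Re_add, Re_Cxsum. f_equal. f_equal.
  rext. rewrite Re_mulr. auto. Qed.
Lemma ImV c : (fun z => Im (v z c)) = Vr d vs ImE Imb c.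
Proof. apply functional_extensionality. intro z. unfold v, vfun, Vr, W.
  rewrite Im_Cxsum. rext. rewrite Im_rmul, Im_add, Im_Cxsum. f_equal. f_equal.
  rext. rewrite Im_mulr. auto. Qed.

Lemma ReVx c z : Re (v z c) = Vr d vs ReE Reb c z.
Proof. rewrite <- ReV. auto. Qed.
Lemma ImVx c z : Im (v z c) = Vr d vs ImE Imb c z.
Proof. rewrite <- ImV. auto. Qed.

Lemma HMre : forall i j, (i < d)%nat -> (j < d)%nat -> ReE j i = - ReE i j.
Proof. intros. unfold ReE. rewrite HE by auto. reflexivity. Qed.
Lemma HMim : forall i j, (i < d)%nat -> (j < d)%nat -> ImE j i = - ImE i j.
Proof. intros. unfold ImE. rewrite HE by auto. reflexivity. Qed.

Lemma relRe : forall x p, (p < d)%nat ->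
  Re lm * W d ReE Reb x p - Im lm * W d ImE Imb x p =
  rsum d (fun k => rsum d (fun a => ReE p a * S a k) * x k) - rsum d (fun j => S p j * W d ReE Reb x j).
Proof. apply rel_lemma.
  - intros p k Hp Hk. pose proof (f_equal Re (Hrel p k Hp Hk)) as H.
    rewrite Re_mul, Re_sub, !Re_Cxsum in H. unfold ReE, ImE. rewrite H. f_equal.
    + rext. apply Re_mulr.
    + rext. apply Re_rmul.
  - intros p Hp. pose proof (f_equal Re (Hrelb p Hp)) as H.
    rewrite Re_mul in H. simpl Re at 3 in H. rewrite Re_Cxsum in H. unfold Reb, Imb. rewrite H.
    f_equal. rext. apply Re_rmul.
Qed.

Lemma relIm : forall x p, (p < d)%nat ->
  Re lm * W d ImE Imb x p - (- Im lm) * W d ReE Reb x p =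
  rsum d (fun k => rsum d (fun a => ImE p a * S a k) * x k) - rsum d (fun j => S p j * W d ImE Imb x j).
Proof. apply rel_lemma.
  - intros p k Hp Hk. pose proof (f_equal Im (Hrel p k Hp Hk)) as H.
    rewrite Im_mul, Im_sub, !Im_Cxsum in H. unfold ReE, ImE.
    replace (Re lm * Im (E p k) - - Im lm * Re (E p k)) with (Re lm * Im (E p k) + Im lm * Re (E p k)) by ring.
    rewrite H. f_equal.
    + rext. apply Im_mulr.
    + rext. apply Im_rmul.
  - intros p Hp. pose proof (f_equal Im (Hrelb p Hp)) as H.
    rewrite Im_mul in H. simpl Im at 3 in H. rewrite Im_Cxsum in H. unfold Reb, Imb.
    replace (Re lm * Im (b p) - - Im lm * Re (b p)) with (Re lm * Im (b p) + Im lm * Re (b p)) by ring.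
    rewrite H. f_equal. rext. apply Im_rmul.
Qed.

Theorem gen_eig : solves_eig d m A S f vs lm v.
Proof.
  split.
  - intros c Hc. split.
    + rewrite ReV. apply (Ck_Vr d m); auto.
    + rewrite ImV. apply (Ck_Vr d m); auto.
  - intros x c Hc. apply Cx_eq.
    + rewrite Re_sub, Re_mul, !Re_add, ReT1, ReT2, ReT3.
      rewrite !ReVx, !ImVx.
      replace (rsum m (fun c' => A c c' * rsum d (fun i => pd (pd (fun z => Re (v z c')) i) i x)))
        with (rsum m (fun c' => A c c' * rsum d (fun i => pd (pd (Vr d vs ReE Reb c') i) i x)))
        by (rext; rewrite ReV; auto).
      rewrite (ReV c).
      replace (rsum m (fun c' => pd (fun y => f y c) c' (vs x) * Re (v x c')))
        with (rsum m (fun c' => pd (fun y => f y c) c' (vs x) * Vr d vs ReE Reb c' x))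
        by (rext; rewrite ReVx; auto).
      rewrite (key d m A S f vs Hf Hvs Hpde ReE Reb HMre x c Hc).
      unfold Vr. rewrite !rsum_mult_l, <- !rsum_minus. simpl Re. apply rsum_zero. intros k Hk.
      pose proof (relRe x k Hk) as H.
      transitivity (pd (fun y => vs y c) k x * ((Re lm * W d ReE Reb x k - Im lm * W d ImE Imb x k) -
         (rsum d (fun k0 => rsum d (fun a => ReE k a * S a k0) * x k0) -
          rsum d (fun j => S k j * W d ReE Reb x j)))); [ring| rewrite H; ring].
    + rewrite Im_sub, Im_mul, !Im_add, ImT1, ImT2, ImT3.
      rewrite !ReVx, !ImVx.
      replace (rsum m (fun c' => A c c' * rsum d (fun i => pd (pd (fun z => Im (v z c')) i) i x)))
        with (rsum m (fun c' => A c c' * rsum d (fun i => pd (pd (Vr d vs ImE Imb c') i) i x)))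
        by (rext; rewrite ImV; auto).
      rewrite (ImV c).
      replace (rsum m (fun c' => pd (fun y => f y c) c' (vs x) * Im (v x c')))
        with (rsum m (fun c' => pd (fun y => f y c) c' (vs x) * Vr d vs ImE Imb c' x))
        by (rext; rewrite ImVx; auto).
      rewrite (key d m A S f vs Hf Hvs Hpde ImE Imb HMim x c Hc).
      unfold Vr. rewrite !rsum_mult_l, <- !rsum_plus, <- !rsum_minus. simpl Im. apply rsum_zero. intros k Hk.
      pose proof (relIm x k Hk) as H.
      transitivity (pd (fun y => vs y c) k x * ((Re lm * W d ImE Imb x k - - Im lm * W d ReE Reb x k) -
         (rsum d (fun k0 => rsum d (fun a => ImE k a * S a k0) * x k0) -
          rsum d (fun j => S k j * W d ImE Imb x j)))); [ring| rewrite H; ring].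
Qed.
End Gen.

Theorem theorem2p3 (d m : nat) (A : nat -> nat -> R)
  (f : (nat -> R) -> (nat -> R)) (S : nat -> nat -> R)
  (U : nat -> nat -> Cx) (lam : nat -> Cx) (vs : (nat -> R) -> (nat -> R)) :
  (2 <= d)%nat ->
  CkV 1 m m f ->
  skew d S ->
  unitary d U ->
  diagonalizes d U S lam ->
  CkV 3 d m vs ->
  solves_nonlinear d m A S f vs ->
  (forall l, (l < d)%nat ->
     solves_eig d m A S f vs (Cxopp (lam l)) (vfun d vs E0 (b_i U l))) /\
  (forall i j, (i < j)%nat -> (j < d)%nat ->
     solves_eig d m A S f vs (Cxopp (Cxadd (lam i) (lam j)))
       (vfun d vs (E_ii U i j) b0)) /\
  (forall l, (l < d)%nat -> Re (Cxopp (lam l)) = 0) /\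
  (forall i j, (i < j)%nat -> (j < d)%nat ->
     Re (Cxopp (Cxadd (lam i) (lam j))) = 0).
Proof.
  intros H2 Hf HS HU HD Hvs [_ Hpde].
  split; [|split; [|split]].
  - intros l Hl. apply gen_eig; auto.
    + intros p k _ _. unfold E0. apply Cx_eq; simpl; ring.
    + intros p k _ _. unfold E0. rewrite !Cxsum_zero; [ring| |]; intros; ring.
    + intros p Hp. unfold b_i. rewrite (eigvec d U S lam HU HD l p Hl Hp). ring.
  - intros i j Hij Hj. assert (Hi : (i < d)%nat) by lia. apply gen_eig; auto.
    + intros p k _ _. unfold E_ii. ring.
    + intros p k Hp Hk. unfold E_ii.
      rewrite (Cxsum_ext_lt d _ (fun a => Cxsub (Cxmul (U p i) (Cxmul (U a j) (RtoCx (S a k))))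
                                   (Cxmul (U p j) (Cxmul (U a i) (RtoCx (S a k)))))) by (intros; ring).
      rewrite (Cxsum_ext_lt d (fun a => Cxmul (RtoCx (S p a)) _)
                 (fun a => Cxsub (Cxmul (Cxmul (RtoCx (S p a)) (U a i)) (U k j))
                                 (Cxmul (Cxmul (RtoCx (S p a)) (U a j)) (U k i)))) by (intros; ring).
      rewrite !Cxsum_minus, <- !Cxsum_mult_l, <- !Cxsum_mult_r.
      rewrite (eigT d U S lam HS HU HD j k Hj Hk), (eigT d U S lam HS HU HD i k Hi Hk).
      rewrite (eigvec d U S lam HU HD i p Hi Hp), (eigvec d U S lam HU HD j p Hj Hp).
      ring.
    + intros p Hp. unfold b0. rewrite Cxsum_zero; [ring|]. intros; ring.
  - intros l Hl. simpl. rewrite (re_lam d U S lam HS HD l Hl). ring.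
  - intros i j Hij Hj. simpl. rewrite (re_lam d U S lam HS HD i), (re_lam d U S lam HS HD j) by lia. ring.
Qed.
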